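(* Let $(X,\rho_X)$ be a symmetric rack, $(A,\phi,\psi,\eta)$ a constant-coefficient $(X,\rho_X)$-module, and $\alpha\in Z^2_{SR}((X,\rho_X);A)$. Then $$\operatorname{Im}(\Gamma)=\big(\operatorname{Aut}(X,\rho_X)\times\operatorname{Aut}(A)\big)_{[\alpha]}=\Lambda_{[\alpha]}^{-1}(0),$$ where $0$ is the identity element of $H^2_{SR}((X,\rho_X);A)$.
   Context: A rack is a set $X$ with binary operation $*$ such that each $x\mapsto x*y$ is bijective (inverse $x\mapsto x*^{-1}y$) and $(x*y)*z=(x*z)*(y*z)$. A symmetric rack $(X,\rho_X)$ is a rack with $\rho_X:X\to X$ such that $\rho_X^2=\mathrm{id}$, $\rho_X(x*y)=\rho_X(x)*y$, $x*\rho_X(y)=x*^{-1}y$. $\operatorname{Aut}(X,\rho_X)$: bijections preserving $*$ and commuting with $\rho_X$. A constant-coefficient $(X,\rho_X)$-module $\mathcal F=(A,\phi,\psi,\eta)$: an abelian group $A$ with group automorphism $\phi$ and endomorphisms $\psi,\eta$ satisfying $\phi\psi=\psi\phi$, $\eta^2=\mathrm{id}$, $\eta\phi=\phi\eta$, $\eta\psi=\psi$, $\phi^2=\mathrm{id}$, $\psi=\phi\psi+\psi^2$, $\phi\psi\eta=-\psi$. $\operatorname{Aut}(A)$: group automorphisms of $A$ commuting with $\phi,\psi,\eta$. $Z^2_{SR}((X,\rho_X);A)$: abelian group of maps $\sigma:X\times X\to A$ with, for all $x,y,z$: $-\phi\sigma(x,z)+\phi\sigma(x,y)+\sigma(x*y,z)-\sigma(x*z,y*z)-\psi\sigma(y,z)=0$,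 $\eta\sigma(x,y)=\sigma(\rho_X(x),y)$, $\phi\sigma(x*y,\rho_X(y))+\sigma(x,y)=0$. $B^2_{SR}$: maps $(x,y)\mapsto\phi\lambda(x)-\lambda(x*y)+\psi\lambda(y)$ with $\lambda:X\to A$ satisfying $\eta\lambda(x)=\lambda(\rho_X(x))$. $H^2_{SR}=Z^2_{SR}/B^2_{SR}$. The group $\operatorname{Aut}(X,\rho_X)\times\operatorname{Aut}(A)$ acts on $Z^2_{SR}$ and on $H^2_{SR}$ by ${}^{(\zeta,\theta)}\sigma(x,y)=\theta(\sigma(\zeta^{-1}(x),\zeta^{-1}(y)))$ and ${}^{(\zeta,\theta)}[\sigma]=[{}^{(\zeta,\theta)}\sigma]$. $\big(\operatorname{Aut}(X,\rho_X)\times\operatorname{Aut}(A)\big)_{[\alpha]}$ is the stabilizer $\{(\zeta,\theta)\mid {}^{(\zeta,\theta)}[\alpha]=[\alpha]\}$. $\Lambda_{[\alpha]}:\operatorname{Aut}(X,\rho_X)\times\operatorname{Aut}(A)\to H^2_{SR}$ is the map $\Lambda_{[\alpha]}(\zeta,\theta)=[\alpha]-{}^{(\zeta,\theta)}[\alpha]$ (the unique element whose addition to ${}^{(\zeta,\theta)}[\alpha]$ gives $[\alpha]$). $E(\mathcal F,\alpha)$ is the symmetric rack on $X\times A$ with $(x,a)*(y,b)=(x*y,\phi(a)+\psi(b)+\alpha(x,y))$ and $\rho_{E(\mathcal F,\alpha)}(x,a)=(\rho_X(x),\eta(a))$. $\operatorname{Aut}_A(E(\mathcal F,\alpha),\rho_{E(\mathcal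 F,\alpha)})$ is the group of symmetric rack automorphisms $\xi$ of it of the form $\xi(x,s)=(\zeta(x),\lambda(x)+\theta(s))$ with $(\zeta,\theta)\in\operatorname{Aut}(X,\rho_X)\times\operatorname{Aut}(A)$ and $\lambda:X\to A$ a map; $\Gamma:\operatorname{Aut}_A(E(\mathcal F,\alpha),\rho_{E(\mathcal F,\alpha)})\to\operatorname{Aut}(X,\rho_X)\times\operatorname{Aut}(A)$ is the group homomorphism $\Gamma(\xi)=(\zeta,\theta)$. *)

(* Defs.v *)
From mathcomp Require Import all_boot all_order all_algebra.
Set Implicit Arguments. Unset Strict Implicit. Unset Printing Implicit Defensive.
Import GRing.Theory.
Local Open Scope ring_scope.

(* A rack (X, op) presented with its inverse operation *^{-1}:
   x *^{-1} y is the (unique) inverse of (. * y) applied to x. *)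
Definition is_rack (X : Type) (op opinv : X -> X -> X) : Prop :=
  (forall x y, op (opinv x y) y = x) /\
  (forall x y, opinv (op x y) y = x) /\
  (forall x y z, op (op x y) z = op (op x z) (op y z)).

Definition is_symmetric_rack (X : Type) (op opinv : X -> X -> X) (rho : X -> X) : Prop :=
  is_rack op opinv /\
  (forall x, rho (rho x) = x) /\
  (forall x y, rho (op x y) = op (rho x) y) /\
  (forall x y, op x (rho y) = opinv x y).

Definition is_hom (A : zmodType) (f : A -> A) : Prop :=
  forall a b, f (a + b) = f a + f b.

Definition is_cc_module (A : zmodType) (phi psi eta : A -> A) : Prop :=
  [/\ is_hom phi, bijective phi, is_hom psi & is_hom eta] /\
  (forall a, phi (psi a) = psi (phi a)) /\
  (forall a, eta (eta a) = a) /\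
  (forall a, eta (phi a) = phi (eta a)) /\
  (forall a, eta (psi a) = psi a) /\
  (forall a, phi (phi a) = a) /\
  (forall a, psi a = phi (psi a) + psi (psi a)) /\
  (forall a, phi (psi (eta a)) = - psi a).

(* zeta in Aut(X, rho_X), given together with its inverse zetainv. *)
Definition is_autX (X : Type) (op : X -> X -> X) (rho : X -> X) (zeta zetainv : X -> X) : Prop :=
  [/\ cancel zeta zetainv, cancel zetainv zeta,
      forall x y, zeta (op x y) = op (zeta x) (zeta y) &
      forall x, zeta (rho x) = rho (zeta x)].

Definition is_autA (A : zmodType) (phi psi eta theta : A -> A) : Prop :=
  [/\ is_hom theta, bijective theta,
      forall a, theta (phi a) = phi (theta a),
      forall a, theta (psi a) = psi (theta a) &
      forall a, theta (eta a) = eta (theta a)].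

Definition is_Z2 (X : Type) (op : X -> X -> X) (rho : X -> X) (A : zmodType)
    (phi psi eta : A -> A) (sigma : X -> X -> A) : Prop :=
  [/\ forall x y z, - phi (sigma x z) + phi (sigma x y) + sigma (op x y) z
                      - sigma (op x z) (op y z) - psi (sigma y z) = 0,
      forall x y, eta (sigma x y) = sigma (rho x) y &
      forall x y, phi (sigma (op x y) (rho y)) + sigma x y = 0].

Definition is_B2 (X : Type) (op : X -> X -> X) (rho : X -> X) (A : zmodType)
    (phi psi eta : A -> A) (sigma : X -> X -> A) : Prop :=
  exists lambda : X -> A,
    (forall x, eta (lambda x) = lambda (rho x)) /\
    (forall x y, sigma x y = phi (lambda x) - lambda (op x y) + psi (lambda y)).

Definition act_cocycle (X : Type) (A : zmodType) (zetainv : X -> X) (theta : A -> A)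
    (sigma : X -> X -> A) : X -> X -> A :=
  fun x y => theta (sigma (zetainv x) (zetainv y)).

Definition E_op (X : Type) (op : X -> X -> X) (A : zmodType) (phi psi : A -> A)
    (alpha : X -> X -> A) (u v : X * A) : X * A :=
  (op u.1 v.1, phi u.2 + psi v.2 + alpha u.1 v.1).

Definition E_rho (X : Type) (rho : X -> X) (A : zmodType) (eta : A -> A) (u : X * A) : X * A :=
  (rho u.1, eta u.2).

Definition is_E_aut (X : Type) (op : X -> X -> X) (rho : X -> X) (A : zmodType)
    (phi psi eta : A -> A) (alpha : X -> X -> A) (xi : X * A -> X * A) : Prop :=
  [/\ bijective xi,
      forall u v, xi (E_op op phi psi alpha u v) = E_op op phi psi alpha (xi u) (xi v) &
      forall u, xi (E_rho rho eta u) = E_rho rho eta (xi u)].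

(* (zeta, theta) in Im(Gamma): there is xi in Aut_A(E(F,alpha), rho_E) with
   xi (x, s) = (zeta x, lambda x + theta s), i.e. Gamma xi = (zeta, theta). *)
Definition in_Im_Gamma (X : Type) (op : X -> X -> X) (rho : X -> X) (A : zmodType)
    (phi psi eta : A -> A) (alpha : X -> X -> A) (zeta : X -> X) (theta : A -> A) : Prop :=
  exists lambda : X -> A,
    is_E_aut op rho phi psi eta alpha (fun u => (zeta u.1, lambda u.1 + theta u.2)).

Definition same_class (X : Type) (op : X -> X -> X) (rho : X -> X) (A : zmodType)
    (phi psi eta : A -> A) (sigma tau : X -> X -> A) : Prop :=
  is_B2 op rho phi psi eta (fun x y => sigma x y - tau x y).

Definition in_stabilizer (X : Type) (op : X -> X -> X) (rho : X -> X) (A : zmodType)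
    (phi psi eta : A -> A) (alpha : X -> X -> A) (zetainv : X -> X) (theta : A -> A) : Prop :=
  same_class op rho phi psi eta (act_cocycle zetainv theta alpha) alpha.

Definition Lambda_rep (X : Type) (A : zmodType) (alpha : X -> X -> A) (zetainv : X -> X)
    (theta : A -> A) : X -> X -> A :=
  fun x y => alpha x y - act_cocycle zetainv theta alpha x y.

Definition Lambda_zero (X : Type) (op : X -> X -> X) (rho : X -> X) (A : zmodType)
    (phi psi eta : A -> A) (alpha : X -> X -> A) (zetainv : X -> X) (theta : A -> A) : Prop :=
  same_class op rho phi psi eta (Lambda_rep alpha zetainv theta) (fun _ _ => 0).

(* Main.v *)
Require Import Defs.
From mathcomp Require Import all_boot all_order all_algebra.
Import GRing.Theory.
Local Open Scope ring_scope.

Section Aux. Context {A : zmodType}.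
Lemma L1 (a b c d e : A) : d + a = c + e + b -> a - b = c - d + e.
Proof. move=> H. have -> : a = c + e + b - d by rewrite -H addrC addKr.
by rewrite [LHS]addrAC addrK addrAC. Qed.
Lemma L2 (a b c d e p q : A) : a - b = c - d + e -> d + (p + q + a) = (c + p) + (e + q) + b.
Proof. move=> H. have -> : a = c - d + e + b by rewrite -H subrK.
rewrite (addrC (p + q)) !addrA (addrAC d) subrr add0r -!addrA; congr (_ + _).
rewrite [RHS]addrCA; congr (_ + _). by rewrite [LHS]addrC -addrA. Qed.
Lemma L3 (a b c d e : A) : a - b = c - d + e -> (b - a) - 0 = -c - -d + -e.
Proof. move=> H. by rewrite subr0 -opprB H !opprD opprK. Qed.
Lemma L4 (a b c d e : A) : (b - a) - 0 = c - d + e -> a - b = -c - -d + -e.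
Proof. move=> H. by rewrite -opprB -[b - a]subr0 H !opprD. Qed.
Lemma hom0 (f : A -> A) : is_hom f -> f 0 = 0.
Proof. move=> h. have := h 0 0. rewrite addr0 => E. apply: (addrI (f 0)). by rewrite addr0 -E. Qed.
Lemma homN (f : A -> A) : is_hom f -> forall a, f (- a) = - f a.
Proof. move=> h a. apply/eqP; rewrite -subr_eq0 opprK -h addNr. by rewrite hom0. Qed.
End Aux.
Arguments hom0 {A f} _.
Arguments homN {A f} _ _.

Theorem proposition6p5
  (X : Type) (op opinv : X -> X -> X) (rho : X -> X)
  (A : zmodType) (phi psi eta : A -> A) (alpha : X -> X -> A) :
  is_symmetric_rack op opinv rho ->
  is_cc_module phi psi eta ->
  is_Z2 op rho phi psi eta alpha ->
  forall (zeta zetainv : X -> X) (theta : A -> A),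
    is_autX op rho zeta zetainv ->
    is_autA phi psi eta theta ->
    (in_Im_Gamma op rho phi psi eta alpha zeta theta <->
       in_stabilizer op rho phi psi eta alpha zetainv theta) /\
    (in_stabilizer op rho phi psi eta alpha zetainv theta <->
       Lambda_zero op rho phi psi eta alpha zetainv theta).
Proof.
move=> _ [[hphi _ hpsi heta] _] _ zeta zetainv theta [zK Kz zop zrho]
  [hth [thi thK Kth] thphi thpsi theta_eta].
have zirho x : zetainv (rho x) = rho (zetainv x).
  by rewrite -{1}(Kz x) -zrho zK.
split.
  split.
  - move=> [lam [_ hop hrho]].
    exists (fun x => lam (zetainv x)); split.
      move=> x; have := hrho (zetainv x, 0).
      by rewrite /E_rho /= => -[_]; rewrite (hom0 heta) (hom0 hth) !addr0 zirho => ->.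
    move=> x y; rewrite /act_cocycle.
    have := hop (zetainv x, 0) (zetainv y, 0).
    rewrite /E_op /= => -[_]; rewrite (hom0 hphi) (hom0 hpsi) (hom0 hth) !addr0 !Kz.
    have -> : op (zetainv x) (zetainv y) = zetainv (op x y).
      by rewrite -{2}(Kz x) -{2}(Kz y) -zop zK.
    rewrite add0r; exact: L1.
  - move=> [mu [hmu1 hmu2]].
    exists (fun x => mu (zeta x)); split.
    + exists (fun u => (zetainv u.1, thi (u.2 - mu (zeta (zetainv u.1))))).
        by move=> [x s] /=; rewrite zK addrC addKr thK.
      by move=> [y t] /=; rewrite Kz Kth addrCA subrr addr0.
    + move=> [x a] [y b]; rewrite /E_op /=; congr pair; first by rewrite zop.
      have := hmu2 (zeta x) (zeta y); rewrite /act_cocycle !zK -zop.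
      rewrite !hth thphi thpsi !hphi !hpsi; exact: L2.
    + move=> [x s]; rewrite /E_rho /=; congr pair; first by [].
      by rewrite heta theta_eta zrho hmu1.
split.
- move=> [mu [hmu1 hmu2]]; exists (fun x => - mu x); split.
    by move=> x; rewrite homN // hmu1.
  move=> x y; rewrite /Lambda_rep (homN hphi) (homN hpsi); exact: L3.
- move=> [mu [hmu1 hmu2]]; exists (fun x => - mu x); split.
    by move=> x; rewrite homN // hmu1.
  move=> x y; rewrite (homN hphi) (homN hpsi); apply: L4; exact: hmu2.
Qed.
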